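(* (1) If $A\in C^\alpha(\Sigma,\mathbb R)$ then $L(A)\in C^\alpha(\Sigma,\mathbb R)$. (2) The linear map $L:C^\alpha(\Sigma,\mathbb R)\to C^\alpha(\Sigma,\mathbb R)$ is continuous. (3) $\mathcal B\subset\ker L$. (4) $L$ induces a continuous linear map $C^\alpha/\mathcal B\to C^\alpha/\mathcal B^*$. (5) The linear map $L^*:C^\alpha(\Sigma,\mathbb R)\to C^\alpha(\Sigma,\mathbb R)$ is continuous and induces a continuous linear map $C^\alpha/\mathcal B^*\to C^\alpha/\mathcal B$ which is the inverse of the map induced by $L$; in particular $L^*(L(A))\in A+\mathcal B$ for every $A\in C^\alpha$.
   Context: $\Sigma=\{1,\dots,d\}^{\mathbb N}$ with metric $d(\omega,\nu)=\lambda^N$, $N=\min\{k:\omega_k\ne\nu_k\}$, $0<\lambda<1$; $C^\alpha(\Sigma,\mathbb R)$ with norm $\|F\|_\alpha=\sup|F|+\sup_{x\ne y}|F(x)-F(y)|/d(x,y)^\alpha$. $T$ denotes the shift on the first factor (points $x$), $\sigma$ the shift on the second factor (points $\omega$) of $\Sigma\times\Sigma$. For $u,v\in\Sigma$ let $\tau_u(v)=(u_0,v_0,v_1,\dots)$, and for $n\ge1$, $\tau^{(n)}_u(v)=(u_{n-1},\dots,u_1,u_0,v_0,v_1,\dots)$, $\tau^{(0)}_u=\mathrm{id}$. Fix $\bar x,\bar\omega\in\Sigma$. For $A\in C^\alpha$ define $L(A)=A^*$ by $A^*(\omega)=A(\tau_\omega\bar x)+\sum_{n\ge1}[A(\tau^{(n+1)}_\omega\bar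 x)-A(\tau^{(n)}_{\sigma\omega}\bar x)]$ (this is the dual potential: with $W_A(x,\omega)=\sum_{n\ge1}[A(\tau^{(n)}_\omega x)-A(\tau^{(n)}_\omega\bar x)]$ one has $A^*(\omega)=A(\tau_\omega x)+W_A(\tau_\omega x,\sigma\omega)-W_A(x,\omega)$ for all $x$). For $\psi\in C^\alpha$ define $L^*(\psi)(x)=\psi(\tau_x\bar\omega)+\sum_{n\ge1}[\psi(\tau^{(n+1)}_x\bar\omega)-\psi(\tau^{(n)}_{Tx}\bar\omega)]$. $\mathcal B=\{u\circ T-u:u\in C^\alpha\}$ and $\mathcal B^*=\{u\circ\sigma-u:u\in C^\alpha\}$ (closed subspaces of $C^\alpha$), with quotient norms $[z+\mathcal B]_\alpha=\inf_{b\in\mathcal B}\|z+b\|_\alpha$. *)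

(* Defs.v *)
From Stdlib Require Import Reals Lra Lia Arith ClassicalEpsilon.
Open Scope R_scope.

Definition Sym (d : nat) : Type := {k : nat | (1 <= k <= d)%nat}.
Definition Seq (d : nat) : Type := nat -> Sym d.

(* shift (this is T on the x-factor and sigma on the omega-factor) *)
Definition shift {d : nat} (x : Seq d) : Seq d := fun k => x (S k).

Definition tau {d : nat} (u v : Seq d) : Seq d :=
  fun k => match k with O => u O | S j => v j end.

(* tau^(n)_u(v) = (u_{n-1}, ..., u_1, u_0, v_0, v_1, ...);  tau^(0)_u = id *)
Definition taun {d : nat} (n : nat) (u v : Seq d) : Seq d :=
  fun k => if (k <? n)%nat then u (n - 1 - k)%nat else v (k - n)%nat.

(* N is the first index where x and y differ; then d(x,y) = lam^N *)
Definition first_diff {d : nat} (x y : Seq d) (N : nat) : Prop :=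
  (forall k, (k < N)%nat -> x k = y k) /\ x N <> y N.

(* sup of a nonempty bounded-above set; 0 by convention otherwise
   (only used on sets of nonnegative reals, where sup of empty set = 0) *)
Definition sup_R (E : R -> Prop) : R :=
  match excluded_middle_informative (bound E /\ exists x, E x) with
  | left H => proj1_sig (completeness E (proj1 H) (proj2 H))
  | right _ => 0
  end.

Definition inf_R (E : R -> Prop) : R := - sup_R (fun r => E (- r)).

(* value of the series sum_{n>=0} f n (0 if it does not converge) *)
Definition series (f : nat -> R) : R :=
  match excluded_middle_informative (exists l, infinite_sum f l) with
  | left H => proj1_sig (constructive_indefinite_description _ H)
  | right _ => 0
  end.

Definition holder (d : nat) (lam alpha : R) (F : Seq d -> R) : Prop :=
  (exists M, forall x, Rabs (F x) <= M) /\
  (exists C, forall x y N, first_diff x y N ->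
     Rabs (F x - F y) <= C * Rpower (lam ^ N) alpha).

Definition holder_norm (d : nat) (lam alpha : R) (F : Seq d -> R) : R :=
  sup_R (fun r => exists x, r = Rabs (F x)) +
  sup_R (fun r => exists x y N, first_diff x y N /\
                    r = Rabs (F x - F y) / Rpower (lam ^ N) alpha).

(* membership in B = {u o T - u : u in C^alpha}; since T and sigma are both
   the shift on Sigma, this is also membership in B^* = {u o sigma - u} *)
Definition in_cob (d : nat) (lam alpha : R) (F : Seq d -> R) : Prop :=
  exists u, holder d lam alpha u /\ forall x, F x = u (shift x) - u x.

Definition qnorm (d : nat) (lam alpha : R) (F : Seq d -> R) : R :=
  inf_R (fun r => exists u, holder d lam alpha u /\
            r = holder_norm d lam alpha (fun x => F x + (u (shift x) - u x))).

Definition Lop {d : nat} (base : Seq d) (A : Seq d -> R) : Seq d -> R :=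
  fun w => A (tau w base) +
    series (fun n => A (taun (n + 2) w base) - A (taun (n + 1) (shift w) base)).

Definition L {d : nat} (xbar : Seq d) := Lop xbar.
Definition Lstar {d : nat} (wbar : Seq d) := Lop wbar.

Definition continuous_wrt {d : nat} (dom : (Seq d -> R) -> Prop)
  (N1 N2 : (Seq d -> R) -> R) (f : (Seq d -> R) -> (Seq d -> R)) : Prop :=
  forall A, dom A -> forall eps, 0 < eps -> exists delta, 0 < delta /\
    forall B, dom B -> N1 (fun x => B x - A x) < delta ->
      N2 (fun x => f B x - f A x) < eps.

Definition linear_on {d : nat} (dom : (Seq d -> R) -> Prop)
  (f : (Seq d -> R) -> (Seq d -> R)) : Prop :=
  forall A B c, dom A -> dom B ->
    forall w, f (fun x => A x + c * B x) w = f A w + c * f B w.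

(* Main.v *)
Require Import Defs.
From Stdlib Require Import Reals Lra Lia Psatz Classical FunctionalExtensionality ClassicalEpsilon.
Open Scope R_scope.

Lemma q_bounds lam alpha : 0 < lam < 1 -> 0 < alpha -> 0 < Rpower lam alpha < 1.
Proof.
  intros Hl Ha. split. unfold Rpower; apply exp_pos.
  replace 1 with (Rpower 1 alpha).
  - apply Rlt_Rpower_l; lra.
  - unfold Rpower; rewrite ln_1, Rmult_0_r; apply exp_0.
Qed.

Lemma Rpower_lamN lam alpha N : 0 < lam -> Rpower (lam ^ N) alpha = (Rpower lam alpha) ^ N.
Proof.
  intros Hl. rewrite <- (Rpower_pow N lam Hl), Rpower_mult, Rmult_comm, <- Rpower_mult.
  apply Rpower_pow. unfold Rpower; apply exp_pos.
Qed.

Lemma pow_le1 q k : 0 <= q <= 1 -> q ^ k <= 1.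
Proof. intros H; induction k; simpl; nra. Qed.

Lemma pow_anti q n m : 0 < q < 1 -> (n <= m)%nat -> q ^ m <= q ^ n.
Proof.
  intros Hq Hnm. replace m with (n + (m - n))%nat by lia. rewrite pow_add.
  assert (0 < q ^ n) by (apply pow_lt; lra).
  assert (q ^ (m - n) <= 1) by (apply pow_le1; lra). nra.
Qed.

Lemma Un_cv_ext (u v : nat -> R) l : (forall n, u n = v n) -> Un_cv u l -> Un_cv v l.
Proof. intros He H eps Heps. destruct (H eps Heps) as [N HN]. exists N. intros n Hn. rewrite <- He. auto. Qed.

Lemma Un_cv_const c : Un_cv (fun _ => c) c.
Proof. intros eps Heps. exists O. intros. unfold R_dist. rewrite Rminus_diag, Rabs_R0. lra. Qed.

Lemma squeeze0 (u v : nat -> R) : (forall n, Rabs (u n) <= v n) -> Un_cv v 0 -> Un_cv u 0.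
Proof.
  intros Hb H eps Heps. destruct (H eps Heps) as [N HN]. exists N. intros n Hn.
  specialize (HN n Hn). specialize (Hb n). unfold R_dist in *. rewrite Rminus_0_r in *.
  pose proof (Rle_abs (v n)). lra.
Qed.

Lemma cv_pow0 q c : 0 < q < 1 -> Un_cv (fun n => c * q ^ n) 0.
Proof.
  intros Hq. replace 0 with (c * 0) by ring. apply CV_mult. apply Un_cv_const.
  intros eps Heps. destruct (pow_lt_1_zero q) with eps as [N HN]. rewrite Rabs_right; lra. auto.
  exists N. intros n Hn. unfold R_dist. rewrite Rminus_0_r. auto.
Qed.

Lemma series_eq f l : infinite_sum f l -> series f = l.
Proof.
  intros H. unfold series. destruct excluded_middle_informative as [e|n].
  - destruct (constructive_indefinite_description _ e) as [l' Hl']; simpl. eapply uniqueness_sum; eauto.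
  - exfalso; apply n; eauto.
Qed.

Lemma sum_lin f g l1 l2 c : infinite_sum f l1 -> infinite_sum g l2 ->
  infinite_sum (fun n => f n + c * g n) (l1 + c * l2).
Proof.
  intros H1 H2. unfold infinite_sum. change (Un_cv (fun N => sum_f_R0 (fun n => f n + c * g n) N) (l1 + c * l2)).
  apply Un_cv_ext with (fun N => sum_f_R0 f N + c * sum_f_R0 g N).
  - intros N. rewrite plus_sum, scal_sum. f_equal. apply sum_eq. intros; ring.
  - apply CV_plus. exact H1. apply CV_mult. apply Un_cv_const. exact H2.
Qed.

Lemma sum_ext f g l : (forall n, f n = g n) -> infinite_sum f l -> infinite_sum g l.
Proof.
  intros He H. change (Un_cv (fun N => sum_f_R0 g N) l). apply Un_cv_ext with (fun N => sum_f_R0 f N).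
  intros; apply sum_eq; auto. exact H.
Qed.

Lemma maj_sum (d g : nat -> R) lg :
  (forall n, Rabs (d n) <= g n) -> infinite_sum g lg ->
  exists l, infinite_sum d l /\ Rabs l <= lg.
Proof.
  intros Hd Hg.
  assert (Hb : forall n, - g n <= d n <= g n).
  { intros n. specialize (Hd n). pose proof (Rle_abs (d n)). pose proof (Rle_abs (- d n)).
    rewrite Rabs_Ropp in *. lra. }
  assert (Hc1 : forall n, 0 <= d n + g n <= g n + 1 * g n) by (intros n; specialize (Hb n); lra).
  assert (Hc2 : {l | Un_cv (fun N => sum_f_R0 (fun n => g n + 1 * g n) N) l}) by (exists (lg + 1 * lg); apply sum_lin; auto).
  destruct (Rseries_CV_comp _ _ Hc1 Hc2) as [la Hla].
  exists (la - lg). split.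
  - change (Un_cv (fun N => sum_f_R0 d N) (la - lg)).
    apply Un_cv_ext with (fun N => sum_f_R0 (fun n => d n + g n) N - sum_f_R0 g N).
    + intros N. rewrite <- minus_sum. apply sum_eq. intros; ring.
    + apply CV_minus; auto.
  - assert (Hd' : Un_cv (fun N => sum_f_R0 d N) (la - lg)).
    { apply Un_cv_ext with (fun N => sum_f_R0 (fun n => d n + g n) N - sum_f_R0 g N).
      + intros N. rewrite <- minus_sum. apply sum_eq. intros; ring.
      + apply CV_minus; auto. }
    apply Rabs_le. split.
    + apply Rle_cv_lim with (opp_seq (fun N => sum_f_R0 g N)) (fun N => sum_f_R0 d N); auto.
      * intros n. unfold opp_seq.
        assert (Ho : sum_f_R0 (fun i => - g i) n = - sum_f_R0 g n).
        { induction n; simpl; [ring| rewrite IHn; ring]. }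
        rewrite <- Ho. apply sum_Rle. intros. specialize (Hb n0). lra.
      * apply CV_opp. exact Hg.
    + apply Rle_cv_lim with (fun N => sum_f_R0 d N) (fun N => sum_f_R0 g N); auto.
      intros n. apply sum_Rle. intros. specialize (Hb n0). lra.
Qed.

Lemma tele_sum (a : nat -> R) : Un_cv a 0 -> infinite_sum (fun n => a n - a (S n)) (a O).
Proof.
  intros H. assert (Hs : forall N, sum_f_R0 (fun n => a n - a (S n)) N = a O - a (S N)).
  { induction N; simpl; [ring| rewrite IHN; ring]. }
  intros eps Heps. destruct (H eps Heps) as [N HN]. exists N. intros n Hn.
  rewrite Hs. unfold R_dist in *. replace (a O - a (S n) - a O) with (- (a (S n) - 0)) by ring.
  rewrite Rabs_Ropp. apply HN. lia.
Qed.

Lemma zero_tail q (d : nat -> R) B m : 0 < q < 1 -> 0 <= B ->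
  (forall j, (j + 2 <= m)%nat -> d j = 0) -> (forall j, Rabs (d j) <= B * q ^ (S j)) ->
  exists l, infinite_sum d l /\ Rabs l <= B / (1 - q) * q ^ m.
Proof.
  intros Hq HB Hz Hd.
  set (c := B / (1 - q)).
  assert (Hc : 0 <= c) by (unfold c; apply Rle_mult_inv_pos; lra).
  set (t := fun j => q ^ (Nat.max (S j) m)).
  destruct (maj_sum d (fun j => c * t j - c * t (S j)) (c * t O)) as [l [Hl Hlb]].
  - intros j. unfold t. destruct (Compare_dec.le_lt_dec (j + 2) m) as [h|h].
    + rewrite Hz by auto. rewrite Rabs_R0. rewrite !Nat.max_r by lia. lra.
    + rewrite !Nat.max_l by lia. eapply Rle_trans; [apply Hd|].
      unfold c. simpl. apply Req_le. field. lra.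
  - apply (tele_sum (fun j => c * t j)). apply squeeze0 with (fun j => c * q ^ j).
    + intros j. unfold t. rewrite Rabs_right.
      * apply Rmult_le_compat_l; auto. apply pow_anti; [auto|lia].
      * apply Rle_ge, Rmult_le_pos; auto. apply pow_le; lra.
    + apply cv_pow0; auto.
  - exists l. split; auto. eapply Rle_trans; [apply Hlb|]. apply Rmult_le_compat_l; auto.
    unfold t. apply pow_anti; [auto|lia].
Qed.

Lemma div_le a p C : 0 < p -> a <= C * p -> a / p <= C.
Proof. intros Hp H. apply Rmult_le_reg_r with p; auto. unfold Rdiv. rewrite Rmult_assoc, Rinv_l; lra. Qed.

Lemma div_ge a p S : 0 < p -> a / p <= S -> a <= S * p.
Proof. intros Hp H. replace a with (a / p * p) by (field; lra). apply Rmult_le_compat_r; lra. Qed.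

Definition agree {d} (n : nat) (x y : Seq d) : Prop := forall k, (k < n)%nat -> x k = y k.

Lemma min_ex (P : nat -> Prop) n : P n -> exists k, P k /\ forall j, (j < k)%nat -> ~ P j.
Proof.
  induction n as [n IH] using (well_founded_induction Wf_nat.lt_wf).
  intros Hn. destruct (classic (exists j, (j < n)%nat /\ P j)) as [[j [Hj Pj]]|Hno].
  - exact (IH j Hj Pj).
  - exists n. split; auto. intros j Hj Pj. apply Hno; eauto.
Qed.

Lemma agree_cases {d} n (x y : Seq d) : agree n x y ->
  x = y \/ exists N, (n <= N)%nat /\ first_diff x y N.
Proof.
  intros Ha. destruct (classic (x = y)) as [e|ne]; [left; auto|right].
  assert (exists k, x k <> y k) as [k Hk].
  { apply NNPP; intro H; apply ne; extensionality k; apply NNPP; intro Hk; apply H; eauto. }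
  destruct (min_ex (fun k => x k <> y k) k Hk) as [N [HN Hmin]].
  exists N. split.
  - destruct (Compare_dec.le_lt_dec n N) as [h|h]; auto. exfalso; apply HN; apply Ha; auto.
  - split; auto. intros j Hj. apply NNPP. intro; eapply Hmin; eauto.
Qed.

Lemma first_diff_agree {d} (x y : Seq d) N : first_diff x y N -> agree N x y.
Proof. intros [H _]. exact H. Qed.

Definition hold {d} (q : R) (F : Seq d -> R) (M C : R) : Prop :=
  0 <= M /\ 0 <= C /\ (forall x, Rabs (F x) <= M) /\
  (forall n x y, agree n x y -> Rabs (F x - F y) <= C * q ^ n).

Lemma holder_hold d lam alpha F : 0 < lam < 1 -> 0 < alpha ->
  holder d lam alpha F -> exists M C, hold (Rpower lam alpha) F M C.
Proof.
  intros Hl Ha [[M HM] [C HC]]. pose proof (q_bounds _ _ Hl Ha) as Hq.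
  set (q := Rpower lam alpha) in *.
  exists (Rabs M), (Rabs C). split; [apply Rabs_pos|]. split; [apply Rabs_pos|]. split.
  - intros x. eapply Rle_trans; [apply HM|apply Rle_abs].
  - intros n x y Hag. destruct (agree_cases n x y Hag) as [e|[N [HnN HN]]].
    + subst. rewrite Rminus_diag, Rabs_R0. apply Rmult_le_pos; [apply Rabs_pos|apply pow_le; lra].
    + eapply Rle_trans; [apply (HC x y N HN)|]. rewrite Rpower_lamN by lra. fold q.
      assert (0 < q ^ N) by (apply pow_lt; lra).
      apply Rle_trans with (Rabs C * q ^ N).
      * apply Rmult_le_compat_r; [lra|apply Rle_abs].
      * apply Rmult_le_compat_l; [apply Rabs_pos|]. apply pow_anti; auto.
Qed.

Lemma hold_holder d lam alpha F M C : 0 < lam < 1 -> 0 < alpha ->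
  hold (Rpower lam alpha) F M C -> holder d lam alpha F.
Proof.
  intros Hl Ha (HM & HC & Hb & Hh). split.
  - exists M; auto.
  - exists C. intros x y N HN. rewrite Rpower_lamN by lra. apply Hh. apply first_diff_agree; auto.
Qed.

Lemma sup_ub E r : bound E -> E r -> r <= sup_R E.
Proof.
  intros Hb Hr. unfold sup_R. destruct excluded_middle_informative as [H|H].
  - destruct (completeness E (proj1 H) (proj2 H)) as [s [Hs1 Hs2]]; simpl. apply Hs1; auto.
  - exfalso; apply H; split; eauto.
Qed.

Lemma sup_least E K : (forall r, E r -> r <= K) -> 0 <= K -> sup_R E <= K.
Proof.
  intros HK H0. unfold sup_R. destruct excluded_middle_informative as [H|H].
  - destruct (completeness E (proj1 H) (proj2 H)) as [s [Hs1 Hs2]]; simpl. apply Hs2. intros r Hr; auto.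
  - lra.
Qed.

Lemma sup_nonneg E : (forall r, E r -> 0 <= r) -> 0 <= sup_R E.
Proof.
  intros Hp. unfold sup_R. destruct excluded_middle_informative as [H|H].
  - destruct (completeness E (proj1 H) (proj2 H)) as [s [Hs1 Hs2]]; simpl.
    destruct (proj2 H) as [x Hx]. specialize (Hs1 x Hx). specialize (Hp x Hx). lra.
  - lra.
Qed.

Lemma inf_lb E r : (forall r, E r -> 0 <= r) -> E r -> inf_R E <= r.
Proof.
  unfold inf_R. intros Hp Hr. assert (- r <= sup_R (fun s => E (- s))).
  { apply sup_ub.
    - exists 0. intros s Hs. specialize (Hp _ Hs). lra.
    - rewrite Ropp_involutive; auto. }
  lra.
Qed.

Lemma inf_glb E K : (exists r, E r) -> (forall r, E r -> K <= r) -> K <= inf_R E.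
Proof.
  intros He HK. unfold inf_R, sup_R. destruct excluded_middle_informative as [H|H].
  - destruct (completeness _ (proj1 H) (proj2 H)) as [s [H1 H2]]; simpl.
    assert (s <= - K). { apply H2. intros t Ht. specialize (HK _ Ht). lra. }
    lra.
  - exfalso. apply H. split.
    + exists (- K). intros t Ht; specialize (HK _ Ht); lra.
    + destruct He as [r Hr]. exists (- r). rewrite Ropp_involutive; auto.
Qed.

Lemma nrm_nonneg d lam alpha F : 0 <= holder_norm d lam alpha F.
Proof.
  unfold holder_norm. apply Rplus_le_le_0_compat; apply sup_nonneg.
  - intros r [x ->]. apply Rabs_pos.
  - intros r [x [y [N [_ ->]]]]. apply Rle_mult_inv_pos. apply Rabs_pos. unfold Rpower; apply exp_pos.
Qed.

Lemma nrm_le d lam alpha F M C : 0 < lam < 1 -> 0 < alpha ->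
  hold (Rpower lam alpha) F M C -> holder_norm d lam alpha F <= M + C.
Proof.
  intros Hl Ha (HM & HC & Hb & Hh). pose proof (q_bounds _ _ Hl Ha) as Hq.
  unfold holder_norm. apply Rplus_le_compat; apply sup_least; auto.
  - intros r [x ->]. auto.
  - intros r [x [y [N [HN ->]]]]. rewrite Rpower_lamN by lra. apply div_le.
    apply pow_lt; lra. apply Hh. apply first_diff_agree; auto.
Qed.

Lemma nrm_hold d lam alpha F : 0 < lam < 1 -> 0 < alpha ->
  holder d lam alpha F -> exists M C, hold (Rpower lam alpha) F M C /\ M + C = holder_norm d lam alpha F.
Proof.
  intros Hl Ha HF. pose proof (q_bounds _ _ Hl Ha) as Hq.
  destruct (holder_hold _ _ _ F Hl Ha HF) as [M0 [C0 (HM & HC & Hb & Hh)]].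
  set (E1 := fun r => exists x, r = Rabs (F x)).
  set (E2 := fun r => exists x y N, first_diff x y N /\ r = Rabs (F x - F y) / Rpower (lam ^ N) alpha).
  assert (B2 : bound E2).
  { exists C0. intros r [x [y [N [HN ->]]]]. rewrite Rpower_lamN by lra. apply div_le.
    apply pow_lt; lra. apply Hh. apply first_diff_agree; auto. }
  exists (sup_R E1), (sup_R E2). split; [|reflexivity].
  split; [apply sup_nonneg; intros r [x ->]; apply Rabs_pos|].
  assert (P2 : 0 <= sup_R E2).
  { apply sup_nonneg. intros r [x [y [N [_ ->]]]]. apply Rle_mult_inv_pos. apply Rabs_pos. unfold Rpower; apply exp_pos. }
  split; [auto|]. split.
  - intros x. apply sup_ub. exists M0. intros r [z ->]. auto. exists x; auto.
  - intros n x y Hag. destruct (agree_cases n x y Hag) as [e|[N [HnN HN]]].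
    + subst. rewrite Rminus_diag, Rabs_R0. apply Rmult_le_pos; [auto|apply pow_le; lra].
    + assert (Hr : Rabs (F x - F y) / Rpower (lam ^ N) alpha <= sup_R E2).
      { apply sup_ub; auto. exists x, y, N; auto. }
      rewrite Rpower_lamN in Hr by lra. apply div_ge in Hr; [|apply pow_lt; lra].
      eapply Rle_trans; [apply Hr|]. apply Rmult_le_compat_l; auto. apply pow_anti; auto.
Qed.

Lemma ltb_t k n : (k < n)%nat -> (k <? n)%nat = true.
Proof. intros; apply Nat.ltb_lt; auto. Qed.
Lemma ltb_f k n : (n <= k)%nat -> (k <? n)%nat = false.
Proof. intros; apply Nat.ltb_ge; auto. Qed.

Lemma shift_taun {d} p (u v : Seq d) : shift (taun (S p) u v) = taun p u v.
Proof.
  extensionality k. unfold shift, taun.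
  destruct (Compare_dec.lt_dec k p) as [h|h].
  - rewrite ltb_t by lia. rewrite ltb_t by lia. f_equal; lia.
  - rewrite ltb_f by lia. rewrite ltb_f by lia. f_equal; lia.
Qed.

Lemma shift_tau {d} (u v : Seq d) : shift (tau u v) = v.
Proof. extensionality k. reflexivity. Qed.

Lemma taun0 {d} (u v : Seq d) : taun 0 u v = v.
Proof. extensionality k. unfold taun. rewrite ltb_f by lia; try (f_equal; lia). Qed.

Lemma taun1 {d} (u v : Seq d) : taun 1 u v = tau u v.
Proof. extensionality k. unfold taun, tau. destruct k.
  - rewrite ltb_t by lia; try reflexivity.
  - rewrite ltb_f by lia; try (f_equal; lia). Qed.

Lemma taun_agree_eq {d} m p (u u' v : Seq d) : agree m u u' -> (p <= m)%nat -> taun p u v = taun p u' v.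
Proof.
  intros Ha Hp. extensionality k. unfold taun. destruct (k <? p)%nat eqn:E; auto.
  apply Nat.ltb_lt in E. apply Ha. lia.
Qed.

Lemma tau_agree_eq {d} m (u u' v : Seq d) : agree m u u' -> (1 <= m)%nat -> tau u v = tau u' v.
Proof. intros Ha Hm. extensionality k. destruct k; simpl; auto. Qed.

Lemma agree_shift {d} n (x y : Seq d) : agree n x y -> agree (n - 1) (shift x) (shift y).
Proof. intros H k Hk. unfold shift. apply H. lia. Qed.

Lemma trm_agree {d} n (w b : Seq d) : agree (S n) (taun (n + 2) w b) (taun (n + 1) (shift w) b).
Proof.
  intros k Hk. unfold taun, shift. rewrite ltb_t by lia. rewrite ltb_t by lia. f_equal; lia.
Qed.

Lemma pow_pred q n : 0 < q < 1 -> q ^ (n - 1) <= / q * q ^ n.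
Proof.
  intros Hq. destruct n.
  - simpl. assert (1 < / q). { rewrite <- Rinv_1. apply Rinv_lt_contravar; lra. } lra.
  - simpl. replace (n - 0)%nat with n by lia. right. field. lra.
Qed.

Lemma hold_lin {d} q (A B : Seq d -> R) M1 C1 M2 C2 c :
  hold q A M1 C1 -> hold q B M2 C2 -> hold q (fun x => A x + c * B x) (M1 + Rabs c * M2) (C1 + Rabs c * C2).
Proof.
  intros (HM1 & HC1 & Hb1 & Hh1) (HM2 & HC2 & Hb2 & Hh2).
  assert (Hc := Rabs_pos c).
  split; [nra|]. split; [nra|]. split.
  - intros x. eapply Rle_trans; [apply Rabs_triang|]. rewrite Rabs_mult.
    specialize (Hb1 x); specialize (Hb2 x). nra.
  - intros n x y Hag. replace (A x + c * B x - (A y + c * B y)) with ((A x - A y) + c * (B x - B y)) by ring.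
    eapply Rle_trans; [apply Rabs_triang|]. rewrite Rabs_mult.
    specialize (Hh1 n x y Hag); specialize (Hh2 n x y Hag).
    assert (Rabs c * Rabs (B x - B y) <= Rabs c * (C2 * q ^ n)) by (apply Rmult_le_compat_l; auto).
    nra.
Qed.

Lemma hold_cob {d} q (u : Seq d -> R) M C : 0 < q < 1 ->
  hold q u M C -> hold q (fun x => u (shift x) - u x) (2 * M) (C / q + C).
Proof.
  intros Hq (HM & HC & Hb & Hh).
  assert (0 <= C / q) by (apply Rle_mult_inv_pos; lra).
  split; [lra|]. split; [lra|]. split.
  - intros x. unfold Rminus. eapply Rle_trans; [apply Rabs_triang|]. rewrite Rabs_Ropp.
    pose proof (Hb x); pose proof (Hb (shift x)). lra.
  - intros n x y Hag.
    replace (u (shift x) - u x - (u (shift y) - u y)) with ((u (shift x) - u (shift y)) + - (u x - u y)) by ring.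
    eapply Rle_trans; [apply Rabs_triang|]. rewrite Rabs_Ropp.
    pose proof (Hh _ _ _ (agree_shift n x y Hag)). pose proof (Hh _ _ _ Hag).
    pose proof (pow_pred q n Hq).
    assert (C * q ^ (n - 1) <= C * (/ q * q ^ n)) by (apply Rmult_le_compat_l; auto).
    unfold Rdiv. nra.
Qed.

Lemma hold_zero {d} q : hold q (fun _ : Seq d => 0) 0 0.
Proof.
  split; [lra|]. split; [lra|]. split.
  - intros; rewrite Rabs_R0; lra.
  - intros. rewrite Rminus_diag, Rabs_R0. lra.
Qed.

Definition trm {d} (b : Seq d) (A : Seq d -> R) (w : Seq d) (n : nat) : R :=
  A (taun (n + 2) w b) - A (taun (n + 1) (shift w) b).

Lemma Lop_eq {d} (b : Seq d) A w : Lop b A w = A (tau w b) + series (trm b A w).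
Proof. reflexivity. Qed.

Lemma trm_bound {d} q (b : Seq d) A M C w n : hold q A M C -> Rabs (trm b A w n) <= C * q ^ (S n).
Proof. intros (_ & _ & _ & Hh). apply Hh. apply trm_agree. Qed.

Lemma trm_conv {d} q (b : Seq d) A M C w : 0 < q < 1 -> hold q A M C ->
  exists l, infinite_sum (trm b A w) l /\ Rabs l <= C / (1 - q).
Proof.
  intros Hq HA. destruct (zero_tail q (trm b A w) C 0) as [l [Hl Hb]]; auto.
  - destruct HA as (_ & HC & _); auto.
  - intros j Hj; lia.
  - intros j; eapply trm_bound; eauto.
  - exists l; split; auto. simpl in Hb. lra.
Qed.

Lemma Lop_hold {d} q (b : Seq d) A M C : 0 < q < 1 -> hold q A M C ->
  hold q (Lop b A) (M + C / (1 - q)) (2 * (M + C / (1 - q)) + 2 * C / (1 - q)).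
Proof.
  intros Hq HA. pose proof HA as (HM & HC & Hb & Hh).
  assert (Hc1 : 0 <= C / (1 - q)) by (apply Rle_mult_inv_pos; lra).
  assert (Hc2 : 0 <= 2 * C / (1 - q)) by (apply Rle_mult_inv_pos; lra).
  assert (Hbd : forall w, Rabs (Lop b A w) <= M + C / (1 - q)).
  { intros w. rewrite Lop_eq. destruct (trm_conv q b A M C w Hq HA) as [l [Hl Hlb]].
    rewrite (series_eq _ _ Hl). eapply Rle_trans; [apply Rabs_triang|]. specialize (Hb (tau w b)). lra. }
  split; [lra|]. split; [lra|]. split; auto.
  intros n w w' Hag. destruct n.
  - simpl. eapply Rle_trans; [unfold Rminus; apply Rabs_triang|]. rewrite Rabs_Ropp.
    pose proof (Hbd w); pose proof (Hbd w'). lra.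
  - rewrite !Lop_eq. rewrite (tau_agree_eq (S n) w w' b Hag) by lia.
    destruct (trm_conv q b A M C w Hq HA) as [l1 [Hl1 _]].
    destruct (trm_conv q b A M C w' Hq HA) as [l2 [Hl2 _]].
    rewrite (series_eq _ _ Hl1), (series_eq _ _ Hl2).
    pose proof (sum_lin _ _ _ _ (-1) Hl1 Hl2) as Hs.
    destruct (zero_tail q (fun j => trm b A w j + -1 * trm b A w' j) (2 * C) (S n)) as [l [Hl Hlb]]; auto; try lra.
    + intros j Hj. unfold trm.
      rewrite (taun_agree_eq (S n) (j + 2) w w' b Hag) by lia.
      rewrite (taun_agree_eq (S n - 1) (j + 1) (shift w) (shift w') b (agree_shift _ _ _ Hag)) by lia. ring.
    + intros j. replace (trm b A w j + -1 * trm b A w' j) with (trm b A w j + - trm b A w' j) by ring.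
      eapply Rle_trans; [apply Rabs_triang|]. rewrite Rabs_Ropp.
      pose proof (trm_bound q b A M C w j HA). pose proof (trm_bound q b A M C w' j HA). lra.
    + assert (E : l1 + -1 * l2 = l) by (eapply uniqueness_sum; eauto).
      replace (A (tau w' b) + l1 - (A (tau w' b) + l2)) with l by lra.
      eapply Rle_trans; [apply Hlb|].
      assert (0 <= q ^ S n) by (apply pow_le; lra).
      unfold Rdiv in *. nra.
Qed.

Lemma Lop_lin {d} q (b : Seq d) A B M1 C1 M2 C2 c w : 0 < q < 1 -> hold q A M1 C1 -> hold q B M2 C2 ->
  Lop b (fun x => A x + c * B x) w = Lop b A w + c * Lop b B w.
Proof.
  intros Hq HA HB. rewrite !Lop_eq.
  destruct (trm_conv q b A M1 C1 w Hq HA) as [l1 [Hl1 _]].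
  destruct (trm_conv q b B M2 C2 w Hq HB) as [l2 [Hl2 _]].
  rewrite (series_eq _ _ Hl1), (series_eq _ _ Hl2).
  rewrite (series_eq _ (l1 + c * l2)). ring.
  eapply sum_ext; [|apply (sum_lin _ _ _ _ c Hl1 Hl2)]. intros n. unfold trm. ring.
Qed.

Lemma Lop_cob {d} q (b : Seq d) u M C w : 0 < q < 1 -> hold q u M C ->
  Lop b (fun x => u (shift x) - u x) w = 0.
Proof.
  intros Hq Hu. rewrite Lop_eq.
  set (a := fun n => u (taun (n + 1) w b) - u (taun n (shift w) b)).
  assert (Ha : infinite_sum (trm b (fun x => u (shift x) - u x) w) (a O)).
  { eapply sum_ext; [|apply tele_sum].
    - intros n. unfold trm, a. replace (n + 2)%nat with (S (n + 1)) by lia.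
      replace (S n + 1)%nat with (S (n + 1)) by lia. replace (n + 1)%nat with (S n) by lia.
      rewrite !shift_taun. ring.
    - apply squeeze0 with (fun n => C * q ^ n); [|apply cv_pow0; auto].
      intros n. destruct Hu as (_ & _ & _ & Hh). apply Hh.
      intros k Hk. unfold taun, shift. rewrite ltb_t by lia. rewrite ltb_t by lia. f_equal; lia. }
  rewrite (series_eq _ _ Ha). unfold a. simpl. rewrite taun1, taun0, shift_tau. ring.
Qed.

Lemma taun_prefix {d} p (u v v' : Seq d) : agree p (taun p u v) (taun p u v').
Proof. intros k Hk. unfold taun. rewrite ltb_t by lia. reflexivity. Qed.

Lemma taun_suffix {d} p n (u x x' : Seq d) : agree n x x' -> agree (p + n) (taun p u x) (taun p u x').
Proof.
  intros H k Hk. unfold taun. destruct (k <? p)%nat eqn:E; auto. apply Nat.ltb_ge in E. apply H. lia.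
Qed.

Lemma taun_tau {d} m (w y : Seq d) : taun (m + 1) (shift w) (tau w y) = taun (m + 2) w y.
Proof.
  extensionality k. unfold taun, shift, tau.
  destruct (Compare_dec.lt_dec k (m + 1)) as [h|h].
  - rewrite ltb_t by lia. rewrite ltb_t by lia. f_equal; lia.
  - rewrite ltb_f by lia. destruct (Nat.eq_dec k (m + 1)) as [e|e].
    + subst. rewrite ltb_t by lia. replace (m + 1 - (m + 1))%nat with O by lia. f_equal; lia.
    + rewrite ltb_f by lia. replace (k - (m + 1))%nat with (S (k - (m + 2))) by lia. reflexivity.
Qed.

Definition shiftn {d} (m : nat) (y : Seq d) : Seq d := fun k => y (k + m)%nat.

Lemma tau_shiftn {d} m (y w : Seq d) : tau (taun (m + 1) y w) (shiftn (S m) y) = shiftn m y.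
Proof.
  extensionality k. unfold tau, shiftn, taun. destruct k.
  - rewrite ltb_t by lia. f_equal; lia.
  - f_equal; lia.
Qed.

Lemma shiftn0 {d} (y : Seq d) : shiftn 0 y = y.
Proof. extensionality k. unfold shiftn. f_equal; lia. Qed.

Lemma tau_tau_shift {d} (x c : Seq d) : tau (tau x c) (shift x) = x.
Proof. extensionality k. destruct k; reflexivity. Qed.

Definition wt {d} (b : Seq d) (A : Seq d -> R) (y w : Seq d) (m : nat) : R :=
  A (taun (m + 1) w y) - A (taun (m + 1) w b).

Definition WW {d} (b : Seq d) (A : Seq d -> R) (y w : Seq d) : R := series (wt b A y w).

Lemma wt_bound {d} q (b : Seq d) A M C y w m : hold q A M C -> Rabs (wt b A y w m) <= C * q ^ (S m).
Proof.
  intros (_ & _ & _ & Hh). unfold wt. replace (S m) with (m + 1)%nat by lia. apply Hh. apply taun_prefix.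
Qed.

Lemma W_conv {d} q (b : Seq d) A M C y w : 0 < q < 1 -> hold q A M C ->
  infinite_sum (wt b A y w) (WW b A y w) /\ Rabs (WW b A y w) <= C / (1 - q).
Proof.
  intros Hq HA. destruct (zero_tail q (wt b A y w) C 0) as [l [Hl Hb]]; auto.
  - destruct HA as (_ & HC & _); auto.
  - intros j Hj; lia.
  - intros j; eapply wt_bound; eauto.
  - unfold WW. rewrite (series_eq _ _ Hl). split; auto. simpl in Hb. lra.
Qed.

Lemma W_ident {d} q (b : Seq d) A M C y w : 0 < q < 1 -> hold q A M C ->
  Lop b A w = A (tau w y) + WW b A (tau w y) (shift w) - WW b A y w.
Proof.
  intros Hq HA. rewrite Lop_eq.
  destruct (trm_conv q b A M C w Hq HA) as [lt [Hlt _]].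
  destruct (W_conv q b A M C (tau w y) (shift w) Hq HA) as [H1 _].
  destruct (W_conv q b A M C y w Hq HA) as [H2 _].
  rewrite (series_eq _ _ Hlt).
  pose proof (sum_lin _ _ _ _ (-1) (sum_lin _ _ _ _ (-1) H1 H2) Hlt) as Hs.
  set (e := fun m => A (taun (m + 1) w b) - A (taun (m + 1) w y)).
  assert (He : infinite_sum (fun m => e m - e (S m)) (e O)).
  { apply tele_sum. apply squeeze0 with (fun n => C * q ^ n); [|apply cv_pow0; auto].
    intros n. unfold e. destruct HA as (_ & HC & _ & Hh).
    eapply Rle_trans; [apply Hh; apply taun_prefix|].
    apply Rmult_le_compat_l; auto. apply pow_anti; [auto|lia]. }
  assert (E : WW b A (tau w y) (shift w) + -1 * WW b A y w + -1 * lt = e O).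
  { eapply uniqueness_sum; [apply Hs|]. eapply sum_ext; [|apply He].
    intros m. unfold e, wt, trm. rewrite taun_tau.
    replace (S m + 1)%nat with (m + 2)%nat by lia. ring. }
  unfold e in E. simpl in E. rewrite !taun1 in E. lra.
Qed.

Lemma W_diff {d} q (b : Seq d) A M C z w1 w2 m : 0 < q < 1 -> hold q A M C -> agree m w1 w2 ->
  Rabs (WW b A z w1 - WW b A z w2) <= 2 * C / (1 - q) * q ^ m.
Proof.
  intros Hq HA Hag.
  destruct (W_conv q b A M C z w1 Hq HA) as [H1 _].
  destruct (W_conv q b A M C z w2 Hq HA) as [H2 _].
  pose proof (sum_lin _ _ _ _ (-1) H1 H2) as Hs.
  destruct (zero_tail q (fun j => wt b A z w1 j + -1 * wt b A z w2 j) (2 * C) m) as [l [Hl Hlb]]; auto.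
  - destruct HA as (_ & HC & _); lra.
  - intros j Hj. unfold wt. rewrite (taun_agree_eq m (j + 1) w1 w2 z Hag) by lia.
    rewrite (taun_agree_eq m (j + 1) w1 w2 b Hag) by lia. ring.
  - intros j. replace (wt b A z w1 j + -1 * wt b A z w2 j) with (wt b A z w1 j + - wt b A z w2 j) by ring.
    eapply Rle_trans; [apply Rabs_triang|]. rewrite Rabs_Ropp.
    pose proof (wt_bound q b A M C z w1 j HA). pose proof (wt_bound q b A M C z w2 j HA). lra.
  - assert (E : WW b A z w1 + -1 * WW b A z w2 = l) by (eapply uniqueness_sum; eauto).
    replace (WW b A z w1 - WW b A z w2) with l by lra. unfold Rdiv in *. lra.
Qed.

Lemma W_star {d} q (b c : Seq d) A M C y w : 0 < q < 1 -> hold q A M C ->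
  infinite_sum (fun m => Lop b A (taun (m + 1) y w) - Lop b A (taun (m + 1) y c))
    (WW b A y w - WW b A y c).
Proof.
  intros Hq HA.
  set (a := fun m => WW b A (shiftn m y) (taun m y w) - WW b A (shiftn m y) (taun m y c)).
  assert (Ha : infinite_sum (fun m => a m - a (S m)) (a O)).
  { apply tele_sum. apply squeeze0 with (fun n => 2 * C / (1 - q) * q ^ n); [|apply cv_pow0; auto].
    intros n. unfold a. eapply W_diff; eauto. apply taun_prefix. }
  assert (Ea : a O = WW b A y w - WW b A y c) by (unfold a; rewrite !taun0, shiftn0; reflexivity). rewrite Ea in Ha.
  eapply sum_ext; [|apply Ha]. intros m. unfold a.
  rewrite (W_ident q b A M C (shiftn (S m) y) (taun (m + 1) y w) Hq HA).
  rewrite (W_ident q b A M C (shiftn (S m) y) (taun (m + 1) y c) Hq HA).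
  rewrite !tau_shiftn. replace (m + 1)%nat with (S m) by lia. rewrite !shift_taun. ring.
Qed.

Lemma key {d} q (b c : Seq d) A M C : 0 < q < 1 -> hold q A M C ->
  forall x, Lop c (Lop b A) x - A x = WW b A x c - WW b A (shift x) c.
Proof.
  intros Hq HA x. rewrite (Lop_eq c).
  rewrite (series_eq _ (WW b A (shift x) (tau x c) - WW b A (shift x) c)).
  - rewrite (W_ident q b A M C (shift x) (tau x c) Hq HA). rewrite tau_tau_shift, shift_tau. ring.
  - eapply sum_ext; [|apply (W_star q b c A M C (shift x) (tau x c) Hq HA)].
    intros m. unfold trm. rewrite taun_tau. reflexivity.
Qed.

Lemma W_hold {d} q (b c : Seq d) A M C : 0 < q < 1 -> hold q A M C ->
  hold q (fun x => - WW b A x c) (C / (1 - q)) (C / (1 - q)).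
Proof.
  intros Hq HA. pose proof HA as (HM & HC & Hb & Hh).
  assert (Hc1 : 0 <= C / (1 - q)) by (apply Rle_mult_inv_pos; lra).
  split; auto. split; auto. split.
  - intros x. rewrite Rabs_Ropp. apply (W_conv q b A M C x c Hq HA).
  - intros n x x' Hag.
    destruct (W_conv q b A M C x c Hq HA) as [H1 _].
    destruct (W_conv q b A M C x' c Hq HA) as [H2 _].
    pose proof (sum_lin _ _ _ _ (-1) H1 H2) as Hs.
    assert (Hqn : 0 <= q ^ n) by (apply pow_le; lra).
    destruct (zero_tail q (fun j => wt b A x c j + -1 * wt b A x' c j) (C * q ^ n) 0) as [l [Hl Hlb]]; auto.
    + apply Rmult_le_pos; auto.
    + intros j Hj; lia.
    + intros j. unfold wt. replace (A (taun (j + 1) c x) - A (taun (j + 1) c b) +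
        -1 * (A (taun (j + 1) c x') - A (taun (j + 1) c b))) with (A (taun (j + 1) c x) - A (taun (j + 1) c x')) by ring.
      eapply Rle_trans; [apply Hh; apply taun_suffix; eauto|].
      rewrite pow_add. replace (j + 1)%nat with (S j) by lia. right; ring.
    + assert (E : WW b A x c + -1 * WW b A x' c = l) by (eapply uniqueness_sum; eauto).
      replace (- WW b A x c - - WW b A x' c) with (- l) by lra. rewrite Rabs_Ropp.
      eapply Rle_trans; [apply Hlb|]. simpl. unfold Rdiv. right; ring.
Qed.


Lemma G1 d lam alpha (b : Seq d) A : 0 < lam < 1 -> 0 < alpha ->
  holder d lam alpha A -> holder d lam alpha (Lop b A).
Proof.
  intros Hl Ha HA. destruct (holder_hold _ _ _ _ Hl Ha HA) as [M [C H]].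
  eapply hold_holder; eauto. apply Lop_hold; eauto. apply q_bounds; auto.
Qed.

Lemma G2 d lam alpha (b : Seq d) : 0 < lam < 1 -> 0 < alpha ->
  linear_on (holder d lam alpha) (Lop b).
Proof.
  intros Hl Ha A B c HA HB w.
  destruct (holder_hold _ _ _ _ Hl Ha HA) as [M1 [C1 H1]].
  destruct (holder_hold _ _ _ _ Hl Ha HB) as [M2 [C2 H2]].
  apply (Lop_lin (Rpower lam alpha) b A B M1 C1 M2 C2); auto. apply q_bounds; auto.
Qed.

Lemma Lop_sub d lam alpha (b : Seq d) A B : 0 < lam < 1 -> 0 < alpha ->
  holder d lam alpha A -> holder d lam alpha B ->
  (fun x => Lop b B x - Lop b A x) = Lop b (fun x => B x - A x).
Proof.
  intros Hl Ha HA HB. extensionality w.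
  replace (fun x => B x - A x) with (fun x => B x + -1 * A x) by (extensionality x; ring).
  rewrite (G2 d lam alpha b Hl Ha B A (-1) HB HA w). ring.
Qed.

Lemma holder_sub d lam alpha (A B : Seq d -> R) : 0 < lam < 1 -> 0 < alpha ->
  holder d lam alpha A -> holder d lam alpha B -> holder d lam alpha (fun x => B x - A x).
Proof.
  intros Hl Ha HA HB.
  destruct (holder_hold _ _ _ _ Hl Ha HA) as [M1 [C1 H1]].
  destruct (holder_hold _ _ _ _ Hl Ha HB) as [M2 [C2 H2]].
  replace (fun x => B x - A x) with (fun x => B x + -1 * A x) by (extensionality x; ring).
  eapply hold_holder; eauto. apply hold_lin; eauto.
Qed.

Lemma holder_addcob d lam alpha (A u : Seq d -> R) : 0 < lam < 1 -> 0 < alpha ->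
  holder d lam alpha A -> holder d lam alpha u ->
  holder d lam alpha (fun x => A x + (u (shift x) - u x)).
Proof.
  intros Hl Ha HA Hu. pose proof (q_bounds _ _ Hl Ha) as Hq.
  destruct (holder_hold _ _ _ _ Hl Ha HA) as [M1 [C1 H1]].
  destruct (holder_hold _ _ _ _ Hl Ha Hu) as [M2 [C2 H2]].
  replace (fun x => A x + (u (shift x) - u x)) with (fun x => A x + 1 * (u (shift x) - u x)) by (extensionality x; ring).
  eapply hold_holder; eauto. apply hold_lin; eauto. apply hold_cob; eauto.
Qed.

Definition KK lam alpha := 3 + 5 / (1 - Rpower lam alpha).

Lemma KK_pos lam alpha : 0 < lam < 1 -> 0 < alpha -> 3 <= KK lam alpha.
Proof.
  intros Hl Ha. pose proof (q_bounds _ _ Hl Ha). unfold KK.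
  assert (0 <= 5 / (1 - Rpower lam alpha)) by (apply Rle_mult_inv_pos; lra). lra.
Qed.

Lemma Lop_nrm d lam alpha (b : Seq d) D : 0 < lam < 1 -> 0 < alpha ->
  holder d lam alpha D -> holder_norm d lam alpha (Lop b D) <= KK lam alpha * holder_norm d lam alpha D.
Proof.
  intros Hl Ha HD. pose proof (q_bounds _ _ Hl Ha) as Hq.
  destruct (nrm_hold _ _ _ _ Hl Ha HD) as [M [C [H HE]]].
  rewrite <- HE. pose proof H as (HM & HC & _).
  eapply Rle_trans; [apply nrm_le; auto; apply Lop_hold; eauto|].
  unfold KK. set (q := Rpower lam alpha) in *. unfold Rdiv.
  assert (Ht : 0 < / (1 - q)) by (apply Rinv_0_lt_compat; lra).
  set (t := / (1 - q)) in *. nra.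
Qed.

Lemma G3 d lam alpha (b : Seq d) : 0 < lam < 1 -> 0 < alpha ->
  continuous_wrt (holder d lam alpha) (holder_norm d lam alpha) (holder_norm d lam alpha) (Lop b).
Proof.
  intros Hl Ha A HA eps Heps. pose proof (KK_pos _ _ Hl Ha) as HK.
  exists (eps / KK lam alpha). split; [apply Rdiv_lt_0_compat; lra|].
  intros B HB Hn. rewrite (Lop_sub d lam alpha b A B Hl Ha HA HB).
  eapply Rle_lt_trans; [apply Lop_nrm; auto; apply holder_sub; auto|].
  apply Rmult_lt_compat_l with (r := KK lam alpha) in Hn; [|lra].
  replace (KK lam alpha * (eps / KK lam alpha)) with eps in Hn by (field; lra). lra.
Qed.

Lemma G4 d lam alpha (b : Seq d) u w : 0 < lam < 1 -> 0 < alpha ->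
  holder d lam alpha u -> Lop b (fun x => u (shift x) - u x) w = 0.
Proof.
  intros Hl Ha Hu. destruct (holder_hold _ _ _ _ Hl Ha Hu) as [M [C H]].
  apply (Lop_cob (Rpower lam alpha) b u M C); auto. apply q_bounds; auto.
Qed.

Lemma holder0 d lam alpha : 0 < lam < 1 -> 0 < alpha -> holder d lam alpha (fun _ => 0).
Proof. intros Hl Ha. eapply hold_holder; eauto. apply hold_zero. Qed.

Lemma G5 d lam alpha (b : Seq d) F : 0 < lam < 1 -> 0 < alpha ->
  in_cob d lam alpha F -> in_cob d lam alpha (Lop b F).
Proof.
  intros Hl Ha [u [Hu Heq]].
  replace F with (fun x => u (shift x) - u x) by (extensionality x; auto).
  exists (fun _ => 0). split; [apply holder0; auto|]. intros x. rewrite (G4 d lam alpha b u x Hl Ha Hu). ring.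
Qed.

Lemma Lop_qn d lam alpha (b : Seq d) D : 0 < lam < 1 -> 0 < alpha ->
  holder d lam alpha D -> qnorm d lam alpha (Lop b D) <= KK lam alpha * qnorm d lam alpha D.
Proof.
  intros Hl Ha HD. pose proof (KK_pos _ _ Hl Ha) as HK.
  assert (E0 : forall F, (fun x => F x + ((fun _ : Seq d => 0) (shift x) - (fun _ : Seq d => 0) x)) = F)
    by (intros F; extensionality x; ring).
  apply Rle_trans with (holder_norm d lam alpha (Lop b D)).
  - unfold qnorm. apply inf_lb.
    + intros r [u [_ ->]]. apply nrm_nonneg.
    + exists (fun _ => 0). split; [apply holder0; auto|]. rewrite E0. reflexivity.
  - assert (holder_norm d lam alpha (Lop b D) / KK lam alpha <= qnorm d lam alpha D).
    { unfold qnorm. apply inf_glb.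
      - eexists. exists (fun _ => 0). split; [apply holder0; auto|]. reflexivity.
      - intros r [u [Hu ->]]. apply div_le; [lra|].
        assert (Hf : Lop b D = Lop b (fun x => D x + (u (shift x) - u x))).
        { extensionality w.
          replace (fun x => D x + (u (shift x) - u x)) with (fun x => D x + 1 * (u (shift x) - u x)) by (extensionality x; ring).
          rewrite (G2 d lam alpha b Hl Ha D _ 1 HD).
          - rewrite (G4 d lam alpha b u w Hl Ha Hu). ring.
          - destruct (holder_hold _ _ _ _ Hl Ha Hu) as [M [C H]]. eapply hold_holder; eauto.
            apply hold_cob; eauto. apply q_bounds; auto. }
        rewrite Hf. rewrite Rmult_comm. apply Lop_nrm; auto. apply holder_addcob; auto. }
    apply div_ge in H; lra.
Qed.

Lemma G6 d lam alpha (b : Seq d) : 0 < lam < 1 -> 0 < alpha ->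
  continuous_wrt (holder d lam alpha) (qnorm d lam alpha) (qnorm d lam alpha) (Lop b).
Proof.
  intros Hl Ha A HA eps Heps. pose proof (KK_pos _ _ Hl Ha) as HK.
  exists (eps / KK lam alpha). split; [apply Rdiv_lt_0_compat; lra|].
  intros B HB Hn. rewrite (Lop_sub d lam alpha b A B Hl Ha HA HB).
  eapply Rle_lt_trans; [apply Lop_qn; auto; apply holder_sub; auto|].
  apply Rmult_lt_compat_l with (r := KK lam alpha) in Hn; [|lra].
  replace (KK lam alpha * (eps / KK lam alpha)) with eps in Hn by (field; lra). lra.
Qed.

Lemma G7 d lam alpha (b c : Seq d) A : 0 < lam < 1 -> 0 < alpha ->
  holder d lam alpha A -> in_cob d lam alpha (fun x => Lop c (Lop b A) x - A x).
Proof.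
  intros Hl Ha HA. pose proof (q_bounds _ _ Hl Ha) as Hq.
  destruct (holder_hold _ _ _ _ Hl Ha HA) as [M [C H]].
  exists (fun x => - WW b A x c). split.
  - eapply hold_holder; eauto. apply (W_hold _ b c A M C); eauto.
  - intros x. rewrite (key _ b c A M C Hq H x). ring.
Qed.

Theorem mainTheorem19 (d : nat) (lam alpha : R) (xbar wbar : Seq d) :
  0 < lam < 1 -> 0 < alpha ->
  let Ca := holder d lam alpha in
  let nrm := holder_norm d lam alpha in
  let qn := qnorm d lam alpha in
  let inB := in_cob d lam alpha in
  (* (1) *)
  (forall A, Ca A -> Ca (L xbar A)) /\
  (* (2) *)
  (linear_on Ca (L xbar) /\ continuous_wrt Ca nrm nrm (L xbar)) /\
  (* (3) *)
  (forall u, Ca u -> forall w, L xbar (fun x => u (shift x) - u x) w = 0) /\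
  (* (4) *)
  ((forall F, inB F -> inB (L xbar F)) /\ continuous_wrt Ca qn qn (L xbar)) /\
  (* (5) *)
  ((forall psi, Ca psi -> Ca (Lstar wbar psi)) /\
   linear_on Ca (Lstar wbar) /\ continuous_wrt Ca nrm nrm (Lstar wbar) /\
   (forall F, inB F -> inB (Lstar wbar F)) /\
   continuous_wrt Ca qn qn (Lstar wbar) /\
   (forall A, Ca A -> inB (fun x => Lstar wbar (L xbar A) x - A x)) /\
   (forall psi, Ca psi -> inB (fun w => L xbar (Lstar wbar psi) w - psi w))).
Proof.
  intros Hl Ha Ca nrm qn inB. unfold Ca, nrm, qn, inB, L, Lstar.
  split; [intros; apply (G1 d lam alpha); auto|].
  split; [split; [apply (G2 d lam alpha)|apply (G3 d lam alpha)]; auto|].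
  split; [intros; apply (G4 d lam alpha); auto|].
  split; [split; [intros; apply (G5 d lam alpha); auto|apply (G6 d lam alpha); auto]|].
  split; [intros; apply (G1 d lam alpha); auto|].
  split; [apply (G2 d lam alpha); auto|].
  split; [apply (G3 d lam alpha); auto|].
  split; [intros; apply (G5 d lam alpha); auto|].
  split; [apply (G6 d lam alpha); auto|].
  split; intros; apply (G7 d lam alpha); auto.
Qed.
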